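(* Let $d\ge 3$ and let $S\subseteq\{0,1\}^d$ be the vertex set of a subcube of $Q_d$ of dimension $d'<d$ (i.e., all strings agreeing with a fixed string on a fixed set of $d-d'$ positions). Then the subgraph of $\mathit{CCC}_d$ induced by $\{[\ell,x] : \ell\in\{0,\dots,d-1\},\ x\in S\}$ is a convex subgraph of $\mathit{CCC}_d$.
   Context: Binary strings $x=x_0x_1\cdots x_{d-1}$ have positions $0,\dots,d-1$ from left to right; $x(i)$ denotes $x$ with the bit at position $i$ complemented. The cube-connected cycle $\mathit{CCC}_d$ ($d\ge 3$) has vertex set $\{[\ell,x]:\ell\in\{0,\dots,d-1\},\ x\in\{0,1\}^d\}$; $[\ell,x]$ and $[\ell',x']$ are adjacent iff either $x=x'$ and $\ell'\equiv \ell\pm 1\pmod d$, or $\ell=\ell'$ and $x'=x(\ell)$. $Q_d$ is the hypercube on $\{0,1\}^d$ (adjacency: differing in exactly one bit). A subgraph $H$ of $G$ is convex if every shortest path in $G$ between two vertices of $H$ lies in $H$. *)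

(* Defs.v *)
From mathcomp Require Import all_boot.
Set Implicit Arguments. Unset Strict Implicit. Unset Printing Implicit Defensive.

Definition bstr (d : nat) := {ffun 'I_d -> bool}.

Definition flip d (x : bstr d) (i : 'I_d) : bstr d :=
  [ffun j => if j == i then ~~ x j else x j].

Definition ccc_vertex (d : nat) := ('I_d * bstr d)%type.

Definition ccc_adj d : rel (ccc_vertex d) := fun u v =>
  let: (l, x) := u in let: (l', x') := v in
  ((x == x') && ((val l' == (val l).+1 %% d) || (val l == (val l').+1 %% d)))
  || ((l == l') && (x' == flip x l)).

(* Walks in a graph given by a relation e: a walk from u to v is a sequence p
   with path e u p and last u p = v (vertices u :: p); its length is size p. *)
Definition shortest_path (T : eqType) (e : rel T) (u v : T) (p : seq T) :=
  [/\ path e u p, last u p = v &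
      forall q, path e u q -> last u q = v -> size p <= size q].

(* A vertex set V induces a convex subgraph: every shortest path between
   two vertices of V has all its vertices in V (its edges then lie in the
   induced subgraph automatically). *)
Definition convex_set (T : finType) (e : rel T) (V : {set T}) :=
  forall u v p, u \in V -> v \in V -> shortest_path e u v p ->
    all (fun w => w \in V) p.

Definition subcube d (I : {set 'I_d}) (a : bstr d) : {set bstr d} :=
  [set x : bstr d | [forall i in I, x i == a i]].

Definition ccc_over d (S : {set bstr d}) : {set ccc_vertex d} :=
  [set v : ccc_vertex d | v.2 \in S].

(* Main.v *)
Require Import Defs.
From mathcomp Require Import all_boot.
Set Implicit Arguments. Unset Strict Implicit.

Section Aux.
Variables (d : nat) (I : {set 'I_d}) (a : bstr d).

Definition phix (x : bstr d) : bstr d := [ffun j => if j \in I then a j else x j].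
Definition phi (w : ccc_vertex d) : ccc_vertex d := (w.1, phix w.2).
Definition diffI (x y : bstr d) := [exists i in I, x i != y i].

Lemma diffI_eq (z x y : bstr d) : (forall i, i \in I -> y i = x i) -> diffI z y = diffI z x.
Proof.
move=> H; apply/existsP/existsP; case=> i /andP[iI h]; exists i; rewrite iI /=.
  by rewrite -H. by rewrite H.
Qed.

Lemma diffI_xx (x : bstr d) : diffI x x = false.
Proof. by apply/existsP; case=> i /andP[_]; rewrite eqxx. Qed.

Lemma step u w : ccc_adj u w ->
  (ccc_adj (phi u) (phi w) /\ forall z, diffI z w.2 = diffI z u.2) \/ phi u = phi w.
Proof.
case: u => l x; case: w => l' x'; rewrite /ccc_adj.
case/orP => [/andP[/eqP xx' hl] | /andP[/eqP ll' /eqP x'f]].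
  left; split; last by move=> z /=; rewrite xx'.
  by rewrite /phi /= xx' eqxx hl.
subst l' x'; case: (boolP (l \in I)) => lI.
  right; rewrite /phi /=; congr pair; apply/ffunP=> j; rewrite !ffunE.
  case: ifP => // jI; rewrite ?ffunE.
  have jl : j != l by apply: contraFneq jI => ->.
  by rewrite (negbTE jl).
left; split.
  rewrite /phi /= eqxx /=; apply/orP; right; apply/eqP; apply/ffunP=> j.
  rewrite !ffunE; case: (boolP (j \in I)) => jI.
    have jl : j != l by apply: contraNneq lI => <-.
    by rewrite (negbTE jl).
  by case: eqP => // ->; rewrite (negbTE lI).
move=> z /=; apply: diffI_eq => i iI; rewrite ffunE.
have il : i != l by apply: contraNneq lI => <-.
by rewrite (negbTE il).
Qed.

Lemma proj u p : path (@ccc_adj d) u p -> exists q,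
  [/\ path (@ccc_adj d) (phi u) q, last (phi u) q = phi (last u p),
      size q <= size p &
      has (fun w => diffI w.2 u.2) p -> size q < size p].
Proof.
elim: p u => [|w p IH] u /=.
  by move=> _; exists [::]; split.
case/andP=> euw pw; have [q [pq lq sq hq]] := IH w pw.
case: (step euw) => [[e' hk]|eq].
  exists (phi w :: q); split => //=.
    by apply/andP; split.
  case/orP => [h|h].
    by move: h; rewrite -hk diffI_xx.
  rewrite ltnS; apply: hq; move: h; apply: sub_has => z; by rewrite -hk.
exists q; rewrite eq; split => //.
by apply: leqW.
Qed.

Lemma phi_id u : u \in ccc_over (subcube I a) -> phi u = u.
Proof.
case: u => l x; rewrite !inE /= => /forall_inP h; rewrite /phi /=; congr pair.
apply/ffunP=> j; rewrite ffunE; case: ifP => // jI; exact/esym/eqP/h.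
Qed.

End Aux.

Theorem lemma4p1 (d d' : nat) (hd : 3 <= d) (hd' : d' < d)
    (I : {set 'I_d}) (hI : #|I| = d - d') (a : bstr d) :
  convex_set (@ccc_adj d) (ccc_over (subcube I a)).
Proof.
move=> u v p uV vV [pp lp sp]; apply/allP => w wp.
case: (boolP (w \in ccc_over (subcube I a))) => // wV; exfalso.
have [q [pq lq sq hq]] := proj I a pp.
rewrite (phi_id uV) in pq lq; rewrite lp (phi_id vV) in lq.
have := sp q pq lq; rewrite leqNgt; apply/negP/negPn; apply: hq.
apply/hasP; exists w => //.
move: wV uV; rewrite !inE => /forall_inPn [i iI ne] /forall_inP uI.
apply/existsP; exists i; by rewrite iI (eqP (uI i iI)) ne.
Qed.
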